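(* Let $a,n$ be positive integers and $Y=\mathrm{key}((a^n))$ (the rectangular tableau with $n$ rows whose $i$-th row consists of $a$ copies of $i$). Let $u$ and $v$ be words in the alphabet $[n]$ with contents $\alpha$ and $\beta$ respectively. The following are equivalent: (1) $vu\sim_K\mathrm{word}(Y)$; (2) $\alpha$ is a partition, $\alpha+\beta=(a^n)$, $u\sim_K\mathrm{word}(\mathrm{key}(\alpha))$ and $v\sim_K\mathrm{word}(\mathrm{key}(\beta))$.
   Context: $\sim_K$ is Knuth equivalence of words. Tableaux are in English notation; column-strict means rows weakly increase and columns strictly increase; $\mathrm{word}(T)=\dotsb u^2u^1$ where $u^i$ is the $i$-th row read left to right. The content of a word in $[n]$ is the vector $(c_1,\dots,c_n)$ with $c_i$ the number of letters $i$. For a composition $\gamma=(\gamma_1,\dots,\gamma_n)$ of nonnegative integers, let $\gamma^+$ be its decreasing rearrangement; the key tableau $\mathrm{key}(\gamma)$ is the unique column-strict tableau of shape $\gamma^+$ and content $\gamma$; explicitly its $j$-th column consists of the letters $i$ with $\gamma_i\ge j$. *)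

(* Defs.v *)
From mathcomp Require Import all_boot.
From Stdlib Require Import Relations.Relation_Operators.
Set Implicit Arguments. Unset Strict Implicit. Unset Printing Implicit Defensive.

Definition word_on (n : nat) (w : seq nat) : bool := all (fun x => 0 < x <= n) w.

Inductive knuth_step : seq nat -> seq nat -> Prop :=
| knuth_K1 (p q : seq nat) (x y z : nat) :
    x < y -> y <= z ->
    knuth_step (p ++ [:: y; z; x] ++ q) (p ++ [:: y; x; z] ++ q)
| knuth_K2 (p q : seq nat) (x y z : nat) :
    x <= y -> y < z ->
    knuth_step (p ++ [:: x; z; y] ++ q) (p ++ [:: z; x; y] ++ q).

Definition knuth_equiv : seq nat -> seq nat -> Prop :=
  clos_refl_sym_trans (seq nat) knuth_step.

Definition content (n : nat) (w : seq nat) : seq nat :=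
  [seq count_mem i w | i <- iota 1 n].

Definition is_partition (gamma : seq nat) : bool := sorted geq gamma.

(* Tableaux (English notation) as the list of their rows, top row first. *)
Definition tableau := seq (seq nat).

Definition tword (T : tableau) : seq nat := flatten (rev T).

(* Key tableau of gamma: its j-th column (j >= 1), read top to bottom,
   consists of the letters i (1 <= i <= n, increasing) with gamma_i >= j. *)
Definition key_col (gamma : seq nat) (j : nat) : seq nat :=
  [seq i <- iota 1 (size gamma) | j <= nth 0 gamma i.-1].

Definition key_ncols (gamma : seq nat) : nat := foldr maxn 0 gamma.

Definition key_row (gamma : seq nat) (r : nat) : seq nat :=
  [seq nth 0 (key_col gamma j) r |
     j <- [seq j <- iota 1 (key_ncols gamma) | r < size (key_col gamma j)]].

Definition key (gamma : seq nat) : tableau :=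
  [seq key_row gamma r | r <- iota 0 (size (key_col gamma 1))].

Example key_ex : key [:: 1; 0; 3] = [:: [:: 1; 3; 3]; [:: 3]]. Proof. by []. Qed.
Example key_rect : tword (key [:: 2; 2]) = [:: 2; 2; 1; 1]. Proof. by []. Qed.

(* Main.v *)
Require Import Defs.
From mathcomp Require Import all_boot zify.
From Stdlib Require Import Relations.Relation_Operators.
Set Implicit Arguments. Unset Strict Implicit. Unset Printing Implicit Defensive.

Lemma knuth_refl w : knuth_equiv w w.
Proof. exact: rst_refl. Qed.
Lemma knuth_sym w w' : knuth_equiv w w' -> knuth_equiv w' w.
Proof. exact: rst_sym. Qed.
Lemma knuth_trans w1 w2 w3 : knuth_equiv w1 w2 -> knuth_equiv w2 w3 -> knuth_equiv w1 w3.
Proof. exact: rst_trans. Qed.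
Lemma knuth_stepE w w' : knuth_step w w' -> knuth_equiv w w'.
Proof. exact: rst_step. Qed.

Lemma knuth_step_cat p q w w' : knuth_step w w' -> knuth_step (p ++ w ++ q) (p ++ w' ++ q).
Proof.
case=> p0 q0 x y z h1 h2.
- have := knuth_K1 (p ++ p0) (q0 ++ q) h1 h2. by rewrite !catA -!(catA p) -!catA.
- have := knuth_K2 (p ++ p0) (q0 ++ q) h1 h2. by rewrite !catA -!(catA p) -!catA.
Qed.

Lemma knuth_cat p q w w' : knuth_equiv w w' -> knuth_equiv (p ++ w ++ q) (p ++ w' ++ q).
Proof.
elim=> [x y H|x|x y _ IH|x y z _ IH1 _ IH2].
- by apply: knuth_stepE; apply: knuth_step_cat.
- exact: knuth_refl.
- exact: knuth_sym.
- exact: knuth_trans IH1 IH2.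
Qed.

Lemma knuth_catl p w w' : knuth_equiv w w' -> knuth_equiv (p ++ w) (p ++ w').
Proof. by move=> H; have := knuth_cat p [::] H; rewrite !cats0. Qed.
Lemma knuth_catr q w w' : knuth_equiv w w' -> knuth_equiv (w ++ q) (w' ++ q).
Proof. by move=> H; have := knuth_cat [::] q H. Qed.

Lemma knuth_step_perm w w' : knuth_step w w' -> perm_eq w w'.
Proof.
case=> p q x y z _ _; rewrite perm_cat2l perm_cat2r; apply/permP => P /=; lia.
Qed.

Lemma knuth_perm w w' : knuth_equiv w w' -> perm_eq w w'.
Proof.
elim=> [x y H|x|x y _ IH|x y z _ IH1 _ IH2].
- exact: knuth_step_perm.
- exact: perm_refl.
- by rewrite perm_sym.
- exact: perm_trans IH1 IH2.
Qed.

Lemma knuth_count w w' a : knuth_equiv w w' -> count_mem a w = count_mem a w'.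
Proof. by move/knuth_perm/permP. Qed.

Definition yamS (w : seq nat) :=
  (forall x, x \in w -> 0 < x) /\
  forall m i, 0 < i -> count_mem i.+1 (drop m w) <= count_mem i (drop m w).

Definition coyamP n (v : seq nat) :=
  (forall x, x \in v -> 0 < x <= n) /\
  forall m i, 0 < i < n -> count_mem i (take m v) <= count_mem i.+1 (take m v).

Lemma yam_local (p q t t' : seq nat) : size t = 3 -> perm_eq t t' ->
  (forall i, 0 < i ->
     count_mem i.+1 (drop 1 t ++ q) <= count_mem i (drop 1 t ++ q) ->
     count_mem i.+1 (drop 2 t ++ q) <= count_mem i (drop 2 t ++ q) ->
     count_mem i.+1 (t ++ q) <= count_mem i (t ++ q) ->
     count_mem i.+1 q <= count_mem i q ->
     count_mem i.+1 (drop 1 t' ++ q) <= count_mem i (drop 1 t' ++ q) /\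
     count_mem i.+1 (drop 2 t' ++ q) <= count_mem i (drop 2 t' ++ q)) ->
  yamS (p ++ t ++ q) -> yamS (p ++ t' ++ q).
Proof.
move=> st pt H [H1 H2]; split.
  have pw : perm_eq (p ++ t ++ q) (p ++ t' ++ q) by rewrite perm_cat2l perm_cat2r.
  by move=> x; rewrite -(perm_mem pw); apply: H1.
have st' : size t' = 3 by rewrite -(perm_size pt).
have Hc : forall s c, count_mem c (s ++ t ++ q) = count_mem c (s ++ t' ++ q).
  by move=> s c; rewrite !count_cat (permP pt).
move=> m i i0.
have E k : k <= 3 -> drop (size p + k) (p ++ t ++ q) = drop k t ++ q.
  move=> hk; rewrite drop_cat ltnNge leq_addr /= addKn drop_cat st.
  by case: ltngtP hk => // -> _; rewrite subnn drop0 drop_oversize ?st.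
have G k : k <= 3 -> count_mem i.+1 (drop k t ++ q) <= count_mem i (drop k t ++ q).
  by move=> hk; rewrite -E //; apply: H2.
have G0 := G 0 isT; rewrite drop0 in G0.
have := H i i0 (G 1 isT) (G 2 isT) G0.
have G3 := G 3 isT; rewrite drop_oversize ?st // in G3.
move=> /(_ G3) [L1 L2].
rewrite drop_cat; case: ltnP => hm.
  have := H2 m i i0; rewrite drop_cat hm.
  by rewrite -!(Hc (drop m p)).
rewrite drop_cat st'; case: (ltnP (m - size p) 3) => hm2.
  move: hm2; case E3: (m - size p) => [|[|[|k]]] // _.
  - by rewrite drop0 -(cat0s (t' ++ q)) -!(Hc [::]) cat0s.
have := H2 m i i0; rewrite drop_cat ltnNge hm /= drop_cat st ltnNge hm2 //.
Qed.

Lemma coyam_local n (p q t t' : seq nat) : size t = 3 -> perm_eq t t' ->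
  (forall i, 0 < i < n ->
     count_mem i p <= count_mem i.+1 p ->
     count_mem i (p ++ take 1 t) <= count_mem i.+1 (p ++ take 1 t) ->
     count_mem i (p ++ take 2 t) <= count_mem i.+1 (p ++ take 2 t) ->
     count_mem i (p ++ t) <= count_mem i.+1 (p ++ t) ->
     count_mem i (p ++ take 1 t') <= count_mem i.+1 (p ++ take 1 t') /\
     count_mem i (p ++ take 2 t') <= count_mem i.+1 (p ++ take 2 t')) ->
  coyamP n (p ++ t ++ q) -> coyamP n (p ++ t' ++ q).
Proof.
move=> st pt H [H1 H2]; split.
  have pw : perm_eq (p ++ t ++ q) (p ++ t' ++ q) by rewrite perm_cat2l perm_cat2r.
  by move=> x; rewrite -(perm_mem pw); apply: H1.
have st' : size t' = 3 by rewrite -(perm_size pt).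
move=> m i i0.
have E k : k <= 3 -> take (size p + k) (p ++ t ++ q) = p ++ take k t.
  move=> hk; rewrite take_cat ltnNge leq_addr /= addKn take_cat st.
  by case: ltngtP hk => // -> _; rewrite subnn take0 cats0 take_oversize ?st.
have G k : k <= 3 -> count_mem i (p ++ take k t) <= count_mem i.+1 (p ++ take k t).
  by move=> hk; rewrite -E //; apply: H2.
have G0 := G 0 isT; rewrite take0 cats0 in G0.
have G3 := G 3 isT; rewrite take_oversize ?st // in G3.
have [L1 L2] := H i i0 G0 (G 1 isT) (G 2 isT) G3.
rewrite take_cat; case: ltnP => hm.
  by have := H2 m i i0; rewrite take_cat hm.
rewrite take_cat st'; case: (ltnP (m - size p) 3) => hm2.
  move: hm2; case E3: (m - size p) => [|[|[|k]]] // _.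
  by rewrite take0 cats0.
have := H2 m i i0; rewrite take_cat ltnNge hm /= take_cat st ltnNge hm2 /=.
by rewrite !count_cat !(permP pt).
Qed.

Lemma yam_step w w' : knuth_step w w' -> (yamS w <-> yamS w').
Proof.
case=> p q x y z h1 h2; split; apply: yam_local => //;
  try (apply/permP => P /=; lia); move=> i i0 /=; lia.
Qed.

Lemma coyam_step n w w' : knuth_step w w' -> (coyamP n w <-> coyamP n w').
Proof.
case=> p q x y z h1 h2; split; apply: coyam_local => //;
  try (apply/permP => P /=; lia); move=> i i0 /=; rewrite !count_cat /=; lia.
Qed.

Lemma yam_knuth w w' : knuth_equiv w w' -> (yamS w <-> yamS w').
Proof.
elim=> [x y H|x|x y _ IH|x y z _ IH1 _ IH2].
- exact: yam_step.
- by [].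
- by split; apply IH.
- by split => H; [apply/IH2/IH1 | apply/IH1/IH2].
Qed.

Lemma coyam_knuth n w w' : knuth_equiv w w' -> (coyamP n w <-> coyamP n w').
Proof.
elim=> [x y H|x|x y _ IH|x y z _ IH1 _ IH2].
- exact: coyam_step.
- by [].
- by split; apply IH.
- by split => H; [apply/IH2/IH1 | apply/IH1/IH2].
Qed.

Lemma rev_iotaS lo k : rev (iota lo k.+1) = (lo + k) :: rev (iota lo k).
Proof. by rewrite -addn1 iotaD rev_cat /=. Qed.

Lemma phase1 x k t :
  knuth_equiv (x :: rev (iota x.+1 k) ++ x :: t) (rev (iota x.+1 k) ++ x :: x :: t).
Proof.
elim: k => [|k IH]; first exact: knuth_refl.
rewrite rev_iotaS /=.
have [y [rest [E hy]]] : exists y rest, rev (iota x.+1 k) ++ x :: t = y :: rest /\ x <= y < x.+1 + k.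
  case: k {IH} => [|k]; first by exists x, t; split => //; lia.
  by exists (x.+1 + k), (rev (iota x.+1 k) ++ x :: t); rewrite rev_iotaS; split => //; lia.
apply: knuth_trans (_ : knuth_equiv _ ((x.+1 + k) :: x :: rev (iota x.+1 k) ++ x :: t)) _.
  rewrite E; apply: knuth_stepE.
  have := @knuth_K2 [::] rest x y (x.+1 + k); rewrite /=; apply; lia.
exact: (knuth_catl [:: x.+1 + k] IH).
Qed.

Lemma phase2 x lo k p t : lo + k <= p -> p <= x ->
  knuth_equiv (p :: x :: rev (iota lo k) ++ t) (p :: rev (iota lo k) ++ x :: t).
Proof.
elim: k p => [|k IH] p h1 h2; first exact: knuth_refl.
rewrite rev_iotaS /=.
apply: knuth_trans (_ : knuth_equiv _ (p :: (lo + k) :: x :: rev (iota lo k) ++ t)) _.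
  apply: knuth_stepE.
  have := @knuth_K1 [::] (rev (iota lo k) ++ t) (lo + k) p x; rewrite /=; apply; lia.
have := IH (lo + k) (leqnn _) ltac:(lia).
exact: (knuth_catl [:: p]).
Qed.

Lemma Kcol lo k x : lo <= x < lo + k ->
  knuth_equiv (x :: rev (iota lo k)) (rev (iota lo k) ++ [:: x]).
Proof.
move=> hx.
have -> : iota lo k = iota lo (x - lo) ++ x :: iota x.+1 (lo + k - x).-1.
  have -> : k = (x - lo) + (lo + k - x).-1.+1 by lia.
  by rewrite iotaD /=; congr (_ ++ _ :: iota _ _); lia.
rewrite rev_cat /= rev_cons -cats1 -!catA /=.
apply: knuth_trans (phase1 _ _ _) _.
have := @phase2 x lo (x - lo) x [::] ltac:(lia) (leqnn _).
rewrite cats0 => H.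
exact: (knuth_catl (rev (iota x.+1 (lo + k - x).-1)) H).
Qed.

Definition colword (cs : seq nat) := flatten [seq rev (iota 1 c) | c <- cs].

Lemma colword_cat A B : colword (A ++ B) = colword A ++ colword B.
Proof. by rewrite /colword map_cat flatten_cat. Qed.
Lemma colword_cons c A : colword (c :: A) = rev (iota 1 c) ++ colword A.
Proof. by []. Qed.

Lemma push_cols x A : 0 < x -> all (fun c => x <= c) A ->
  knuth_equiv (x :: colword A) (colword A ++ [:: x]).
Proof.
move=> x0; elim: A => [|c A IH] /=; first by move=> _; exact: knuth_refl.
case/andP=> hc hA.
apply: knuth_trans (_ : knuth_equiv _ (rev (iota 1 c) ++ x :: colword A)) _.
  have := knuth_catr (colword A) (@Kcol 1 c x ltac:(lia)).
  by rewrite -catA.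
rewrite -catA; apply: knuth_catl; exact: IH.
Qed.

Lemma count_colword y cs : 0 < y -> count_mem y (colword cs) = count (fun c => y <= c) cs.
Proof.
move=> y0; elim: cs => [|c cs IH] //=.
rewrite count_cat IH count_rev count_uniq_mem ?iota_uniq // mem_iota; congr (_ + _).
by rewrite y0 add1n ltnS.
Qed.

Lemma geq_trans' : transitive geq.
Proof. move=> a b c /= h1 h2; lia. Qed.
Lemma leq_trans' : transitive leq.
Proof. move=> a b c /= h1 h2; lia. Qed.

Lemma split_geq x cs : pairwise geq cs ->
  cs = [seq c <- cs | x <= c] ++ [seq c <- cs | c < x].
Proof.
elim: cs => [|c cs IH] //= /andP [hall hp].
case: (leqP x c) => hc /=; first by rewrite -IH.
have Hn : forall d, d \in cs -> d < x.
  by move=> d hd; have := allP hall d hd => /=; lia.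
rewrite (eq_in_filter (a2 := pred0)) ?filter_pred0 /=; last first.
  by move=> d hd /=; have := Hn d hd; lia.
by rewrite (eq_in_filter (a2 := predT)) ?filter_predT // => d hd /=; apply: Hn.
Qed.

Lemma yam_cons x w : yamS (x :: w) -> yamS w.
Proof.
case=> H1 H2; split; first by move=> y hy; apply: H1; rewrite inE hy orbT.
by move=> m i i0; have := H2 m.+1 i i0.
Qed.

Lemma yam_canon w : yamS w ->
  exists cs, [/\ pairwise geq cs, all (fun c => 0 < c) cs & knuth_equiv w (colword cs)].
Proof.
elim: w => [|x w IH] Y; first by exists [::]; split => //; exact: knuth_refl.
have [cs' [P' A' K']] := IH (yam_cons Y).
have x0 : 0 < x by case: Y => H1 _; apply: H1; rewrite inE eqxx.
have K1 : knuth_equiv (x :: w) (x :: colword cs') by apply: (knuth_catl [:: x]).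
have Y' : yamS (x :: colword cs') by apply/(yam_knuth K1).
case: (ltngtP x 1) => hx; first by lia.
-
  have := Y'.2 0 x.-1 ltac:(lia); rewrite drop0 (_ : x.-1.+1 = x); last by lia.
  rewrite /= !count_colword; try lia.
  rewrite eqxx (_ : (x == x.-1) = false); last by apply/eqP; lia.
  rewrite (split_geq x P') !count_cat.
  set A := [seq c <- cs' | x <= c]; set B := [seq c <- cs' | c < x].
  have cA1 : count (fun c => x <= c) A = size A.
    by rewrite /A count_filter size_filter; apply: eq_count => c /=; rewrite andbb.
  have cA2 : count (fun c => x.-1 <= c) A = size A.
    rewrite /A count_filter size_filter; apply: eq_count => c /=; lia.
  have cB1 : count (fun c => x <= c) B = 0.
    rewrite /B count_filter; apply/eqP; rewrite -leqn0 leqn0 eqn0Ngt -has_count.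
    by apply/hasPn => c _ /=; lia.
  rewrite cA1 cA2 cB1 => hcnt.
  have PB : pairwise geq B.
    by have := P'; rewrite {1}(split_geq x P') pairwise_cat => /and3P [].
  have PA : pairwise geq A.
    by have := P'; rewrite {1}(split_geq x P') pairwise_cat => /and3P [].
  case EB: B hcnt PB => [|b B'] /=; first by move=> h; lia.
  move=> hcnt /andP [hb PB'].
  have bx : b < x by have := (@mem_filter _ (fun c => c < x) b cs'); rewrite -/B EB inE eqxx /= => /esym/andP [].
  have bx1 : b = x.-1.
    move: hcnt; case: (leqP x.-1 b) => hb1 /=; first lia.
    have -> : count (fun c => x.-1 <= c) B' = 0.
      apply/eqP; rewrite -leqn0 leqn0 eqn0Ngt -has_count.
      by apply/hasPn => c hc /=; have := allP hb c hc => /=; lia.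
    by move=> h; lia.
  exists (A ++ x :: B'); split.
  + rewrite pairwise_cat PA /= PB' andbT; apply/andP; split.
    * apply/allrelP => c d hc hd /=; move: hc hd; rewrite !inE /A mem_filter => /andP [hc _].
      case/orP => [/eqP -> | hd]; first lia.
      by have := allP hb d hd => /=; lia.
    * by apply/allP => d hd /=; have := allP hb d hd => /=; lia.
  + rewrite all_cat /= x0 /=; apply/andP; split.
      by apply/allP => c; rewrite mem_filter => /andP [hc _]; lia.
    by apply/allP => c hc; have := A'; rewrite {1}(split_geq x P') all_cat -/B EB /= => /and3P [_ _ /allP]; apply.
  + apply: knuth_trans K1 _.
    rewrite (split_geq x P') -/A -/B EB !colword_cat !colword_cons bx1.
    have := knuth_catr (rev (iota 1 x.-1) ++ colword B') (@push_cols x A x0 _).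
    have ->: rev (iota 1 x) = x :: rev (iota 1 x.-1) by rewrite -{1}(prednK x0) rev_iotaS add1n prednK.
    rewrite -!catA /=; apply.
    by apply/allP => c; rewrite mem_filter => /andP [hc _].
-
  subst x; exists (cs' ++ [:: 1]); split.
  + rewrite pairwise_cat P' /= andbT; apply/allrelP => c d hc; rewrite inE => /eqP ->.
    by have := allP A' c hc.
  + by rewrite all_cat A'.
  + apply: knuth_trans K1 _.
    rewrite colword_cat /=; rewrite (_ : colword [:: 1] = [:: 1]) //.
    by apply: push_cols.
Qed.

Lemma count_leq_split x (cs : seq nat) :
  count (fun c => x <= c) cs = count_mem x cs + count (fun c => x.+1 <= c) cs.
Proof. elim: cs => [|c cs IH] //=; rewrite IH eq_sym; case: ltngtP => h /=; lia. Qed.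

Lemma colword_inj cs1 cs2 : pairwise geq cs1 -> pairwise geq cs2 ->
  all (fun c => 0 < c) cs1 -> all (fun c => 0 < c) cs2 ->
  (forall y, 0 < y -> count_mem y (colword cs1) = count_mem y (colword cs2)) -> cs1 = cs2.
Proof.
move=> P1 P2 A1 A2 H.
apply: (sorted_eq geq_trans'); first by move=> a b /andP [] /=; lia.
- by rewrite sorted_pairwise //; apply: geq_trans'.
- by rewrite sorted_pairwise //; apply: geq_trans'.
apply/allP => y _ /=; apply/eqP.
case: y => [|y].
  have z s : all (fun c => 0 < c) s -> count_mem 0 s = 0.
    by move=> As; apply/eqP; rewrite -leqn0 leqn0 eqn0Ngt -has_count; apply/hasPn => c /(allP As) /=; lia.
  by rewrite !z.
have := H y.+1 isT; have := H y.+2 isT; rewrite !count_colword //.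
by rewrite !(count_leq_split y.+1) => ->; move/eqP; rewrite eqn_add2r => /eqP.
Qed.

Lemma yam_equiv w1 w2 : yamS w1 -> yamS w2 ->
  (forall y, count_mem y w1 = count_mem y w2) -> knuth_equiv w1 w2.
Proof.
move=> Y1 Y2 H.
have [cs1 [P1 A1 K1]] := yam_canon Y1.
have [cs2 [P2 A2 K2]] := yam_canon Y2.
have E : cs1 = cs2.
  apply: colword_inj => // y _.
  by rewrite -(knuth_count _ K1) -(knuth_count _ K2).
subst cs2; apply: knuth_trans K1 _; exact: knuth_sym.
Qed.

Definition ccolword n (cs : seq nat) := flatten [seq rev (iota (n.+1 - c) c) | c <- cs].

Lemma ccolword_cat n A B : ccolword n (A ++ B) = ccolword n A ++ ccolword n B.
Proof. by rewrite /ccolword map_cat flatten_cat. Qed.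
Lemma ccolword_cons n c A : ccolword n (c :: A) = rev (iota (n.+1 - c) c) ++ ccolword n A.
Proof. by []. Qed.

Lemma cpush n x A : x <= n -> all (fun c => n.+1 - x <= c <= n) A ->
  knuth_equiv (x :: ccolword n A) (ccolword n A ++ [:: x]).
Proof.
move=> xn; elim: A => [|c A IH] /=; first by move=> _; exact: knuth_refl.
case/andP=> hc hA.
apply: knuth_trans (_ : knuth_equiv _ (rev (iota (n.+1 - c) c) ++ x :: ccolword n A)) _.
  have := knuth_catr (ccolword n A) (@Kcol (n.+1 - c) c x ltac:(lia)).
  by rewrite -catA.
rewrite -catA; apply: knuth_catl; exact: IH.
Qed.

Lemma count_ccolword n y cs : 0 < y <= n -> all (fun c => c <= n) cs ->
  count_mem y (ccolword n cs) = count (fun c => n.+1 - y <= c) cs.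
Proof.
move=> hy; elim: cs => [|c cs IH] //= /andP [hc hA].
rewrite count_cat IH // count_rev count_uniq_mem ?iota_uniq // mem_iota; congr (_ + _).
have E1 : (n.+1 - c <= y) = (n.+1 - y <= c) by apply/idP/idP; lia.
have E2 : y < n.+1 - c + c by lia.
by rewrite E1 E2 andbT.
Qed.

Lemma split_leq x cs : pairwise leq cs ->
  cs = [seq c <- cs | c < x] ++ [seq c <- cs | x <= c].
Proof.
elim: cs => [|c cs IH] //= /andP [hall hp].
case: (ltnP c x) => hc /=; first by rewrite -IH.
have Hn : forall d, d \in cs -> x <= d.
  by move=> d hd; have := allP hall d hd => /=; lia.
rewrite (eq_in_filter (a2 := pred0)) ?filter_pred0 /=; last first.
  by move=> d hd /=; have := Hn d hd; lia.
by rewrite (eq_in_filter (a2 := predT)) ?filter_predT // => d hd /=; apply: Hn.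
Qed.

Lemma coyam_rcons n v x : coyamP n (rcons v x) -> coyamP n v.
Proof.
case=> H1 H2; split; first by move=> y hy; apply: H1; rewrite mem_rcons inE hy orbT.
move=> m i i0; have := H2 (minn m (size v)) i i0.
rewrite -cats1 takel_cat ?geq_minr //.
case: (leqP m (size v)) => h; first by [].
by rewrite take_size take_oversize // ltnW.
Qed.

Ltac clia := repeat match goal with
 | H : knuth_equiv _ _ |- _ => clear H
 | H : coyamP _ _ |- _ => clear H
 | H : is_true (pairwise _ _) |- _ => clear H
 | H : is_true (all _ _) |- _ => clear H
 | H : forall _, _ |- _ => clear H
 end; change (Equality.sort Datatypes_nat__canonical__eqtype_Equality) with nat in *; lia.

Lemma coyam_canon n v : coyamP n v ->
  exists cs, [/\ pairwise leq cs, all (fun c => 0 < c <= n) cs & knuth_equiv v (ccolword n cs)].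
Proof.
elim/last_ind: v => [|v x IH] Y; first by exists [::]; split => //; exact: knuth_refl.
have [cs' [P' A' K']] := IH (coyam_rcons Y).
have xr : 0 < x <= n by case: Y => H1 _; apply: H1; rewrite mem_rcons inE eqxx.
have K1 : knuth_equiv (rcons v x) (ccolword n cs' ++ [:: x]) by rewrite -cats1; apply: knuth_catr.
have Y' : coyamP n (ccolword n cs' ++ [:: x]) by apply/(coyam_knuth _ K1).
have An : all (fun c => c <= n) cs' by apply/allP => c /(allP A') /andP [].
case: (ltngtP x n) => hx; last first.
-
  subst x; exists (1 :: cs'); split.
  + rewrite /= P' andbT; apply/allP => c /(allP A') /=; clia.
  + by rewrite /= A' andbT; clia.
  + apply: knuth_trans K1 _; rewrite ccolword_cons subn1 /=.
    apply: knuth_sym; apply: cpush => //.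
    by apply/allP => c /(allP A') /=; clia.
- clia.
-
  have := Y'.2 (size (ccolword n cs' ++ [:: x])) x ltac:(clia); rewrite take_size.
  rewrite !count_cat /= eqxx (_ : (x == x.+1) = false); last by apply/eqP; clia.
  rewrite !count_ccolword //; try clia.
  set th := n.+1 - x; rewrite (_ : n.+1 - x.+1 = th.-1); last by rewrite /th; clia.
  rewrite (split_leq th P') !count_cat.
  set A := [seq c <- cs' | th <= c]; set B := [seq c <- cs' | c < th].
  have cA1 : count (fun c => th <= c) A = size A.
    by rewrite /A count_filter size_filter; apply: eq_count => c /=; rewrite andbb.
  have cA2 : count (fun c => th.-1 <= c) A = size A.
    rewrite /A count_filter size_filter; apply: eq_count => c /=; clia.
  have cB1 : count (fun c => th <= c) B = 0.
    rewrite /B count_filter; apply/eqP; rewrite -leqn0 leqn0 eqn0Ngt -has_count.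
    by apply/hasPn => c _ /=; clia.
  rewrite cA1 cA2 cB1 => hcnt.
  have PB : pairwise leq B.
    by have := P'; rewrite {1}(split_leq th P') pairwise_cat => /and3P [].
  have PA : pairwise leq A.
    by have := P'; rewrite {1}(split_leq th P') pairwise_cat => /and3P [].
  have AB : all (fun c => 0 < c <= n) (B ++ A) by rewrite -(split_leq th P').
  case/lastP EB: B hcnt PB AB => [|B' b] /=; first by move=> h; clia.
  move=> hcnt PB AB.
  have hb : all (fun c => c <= b) B'.
    move: PB; rewrite -cats1 pairwise_cat => /and3P [/allrelP H _ _].
    by apply/allP => c hc; apply: (H c b hc); rewrite inE.
  have PB' : pairwise leq B' by move: PB; rewrite -cats1 pairwise_cat => /and3P [].
  have bx : b < th.
    have : b \in B by rewrite EB mem_rcons inE eqxx.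
    by rewrite /B mem_filter => /andP [].
  have bx1 : b = th.-1.
    move: hcnt; rewrite -cats1 count_cat /=; case: (leqP th.-1 b) => hb1 /=; first clia.
    have -> : count (fun c => th.-1 <= c) B' = 0.
      apply/eqP; rewrite -leqn0 leqn0 eqn0Ngt -has_count.
      by apply/hasPn => c hc /=; have := allP hb c hc => /=; clia.
    by move=> h; clia.
  have AA : all (fun c => 0 < c <= n) A by move: AB; rewrite all_cat => /andP [].
  have AB' : all (fun c => 0 < c <= n) B' by move: AB; rewrite -cats1 -catA !all_cat => /andP [].
  exists (B' ++ th :: A); split.
  + rewrite pairwise_cat PB' /= PA andbT; apply/andP; split.
    * apply/allrelP => c d hc hd /=; have := allP hb c hc; move: hd; rewrite !inE /A mem_filter.
      case/orP => [/eqP -> | /andP [hd _]] /=; clia.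
    * by apply/allP => d; rewrite /A mem_filter => /andP [hd _].
  + rewrite all_cat AB' /= AA andbT /th; clia.
  + apply: knuth_trans K1 _.
    rewrite (split_leq th P') -/A -/B EB -cats1 !ccolword_cat !ccolword_cons /= cats0 bx1.
    rewrite -!catA; apply: knuth_catl; rewrite catA.
    have -> : rev (iota (n.+1 - th) th) = rev (iota (n.+1 - th.-1) th.-1) ++ [:: x].
      have -> : th = th.-1.+1 by rewrite /th; clia.
      rewrite -/th (_ : n.+1 - th.-1.+1 = x); last by rewrite /th; clia.
      rewrite (_ : n.+1 - th.-1 = x.+1); last by rewrite /th; clia.
      by rewrite /= rev_cons cats1.
    rewrite -!catA; apply: knuth_catl; apply: knuth_sym; apply: cpush; first clia.
    apply/allP => c hc; have := allP AA c hc; move: hc; rewrite /A mem_filter /th => /andP [h1 _] /=; clia.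
Qed.

Lemma ccolword_inj n cs1 cs2 : pairwise leq cs1 -> pairwise leq cs2 ->
  all (fun c => 0 < c <= n) cs1 -> all (fun c => 0 < c <= n) cs2 ->
  (forall y, 0 < y <= n -> count_mem y (ccolword n cs1) = count_mem y (ccolword n cs2)) -> cs1 = cs2.
Proof.
move=> P1 P2 A1 A2 H.
have B1 : all (fun c => c <= n) cs1 by apply/allP => c /(allP A1) /andP [].
have B2 : all (fun c => c <= n) cs2 by apply/allP => c /(allP A2) /andP [].
have Cs s : 0 < s <= n.+1 -> count (fun c => s <= c) cs1 = count (fun c => s <= c) cs2.
  move=> hs; case: (ltnP s n.+1) => h.
  - have := H (n.+1 - s) ltac:(lia); rewrite !count_ccolword //; try lia.
    by rewrite (_ : n.+1 - (n.+1 - s) = s) //; lia.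
  - have -> : s = n.+1 by lia.
    have z cs : all (fun c => 0 < c <= n) cs -> count (fun c => n.+1 <= c) cs = 0.
      by move=> As; apply/eqP; rewrite -leqn0 leqn0 eqn0Ngt -has_count; apply/hasPn => c /(allP As) /=; lia.
    by rewrite !z.
apply: (sorted_eq leq_trans'); first by move=> a b /andP [] /=; lia.
- by rewrite sorted_pairwise //; apply: leq_trans'.
- by rewrite sorted_pairwise //; apply: leq_trans'.
apply/allP => y _ /=; apply/eqP.
have z cs s : all (fun c => 0 < c <= n) cs -> (s == 0) || (n < s) -> count_mem s cs = 0.
  move=> As hs; apply/eqP; rewrite -leqn0 leqn0 eqn0Ngt -has_count.
  by apply/hasPn => c /(allP As) /= hc; apply/eqP => E; subst; lia.
case: (boolP ((y == 0) || (n < y))) => hy; first by rewrite !z.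
have := Cs y ltac:(lia); have := Cs y.+1 ltac:(lia).
by rewrite !(count_leq_split y) => ->; move/eqP; rewrite eqn_add2r => /eqP.
Qed.

Lemma coyam_equiv n w1 w2 : coyamP n w1 -> coyamP n w2 ->
  (forall y, count_mem y w1 = count_mem y w2) -> knuth_equiv w1 w2.
Proof.
move=> Y1 Y2 H.
have [cs1 [P1 A1 K1]] := coyam_canon Y1.
have [cs2 [P2 A2 K2]] := coyam_canon Y2.
have E : cs1 = cs2.
  apply: (ccolword_inj P1 P2 A1 A2) => y _.
  by rewrite -(knuth_count _ K1) -(knuth_count _ K2).
subst cs2; apply: knuth_trans K1 _; exact: knuth_sym.
Qed.

Ltac nlia := change (Equality.sort Datatypes_nat__canonical__eqtype_Equality) with nat; lia.

Lemma flatten_rev_cons (R : seq nat) rest :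
  flatten (rev (R :: rest)) = flatten (rev rest) ++ R.
Proof. by rewrite rev_cons -cats1 flatten_cat /= cats0. Qed.

Fixpoint yt (B : seq nat) (rows : seq (seq nat)) : Prop :=
  match rows with
  | [::] => True
  | R :: rest => (forall i, 0 < i -> count_mem i.+1 R <= count_mem i B) /\ yt R rest
  end.

Lemma count_drop_le (a : nat) s m : count_mem a (drop m s) <= count_mem a s.
Proof. by rewrite -{2}(cat_take_drop m s) count_cat leq_addl. Qed.
Lemma count_take_le (a : nat) s m : count_mem a (take m s) <= count_mem a s.
Proof. by rewrite -{2}(cat_take_drop m s) count_cat leq_addr. Qed.

Lemma yt_suffix B rows : yt B rows -> forall m i, 0 < i ->
  count_mem i.+1 (drop m (flatten (rev rows))) <=
  count_mem i (drop m (flatten (rev rows))) + count_mem i B.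
Proof.
elim: rows B => [|R rest IH] B /=; first by move=> _ m i _; case: m.
case=> H1 H2 m i i0; rewrite flatten_rev_cons drop_cat.
case: ifP => _.
  rewrite !count_cat; have := IH R H2 m i i0; have := H1 i i0; nlia.
have := count_drop_le i.+1 R (m - size (flatten (rev rest))); have := H1 i i0; nlia.
Qed.

Lemma yt_iota f s k B : (forall i, 0 < i -> count_mem i.+1 (f s) <= count_mem i B) ->
  (forall r i, 0 < i -> count_mem i.+1 (f r.+1) <= count_mem i (f r)) ->
  yt B [seq f r | r <- iota s k].
Proof.
move=> H0 H; elim: k s B H0 => [|k IH] s B H0 //=; split => //.
apply: IH => i i0; exact: H.
Qed.

Fixpoint crows n (rows : seq (seq nat)) : Prop :=
  match rows with
  | [::] => True
  | R :: rest => (forall i, 0 < i < n -> count_mem i R <= count_mem i.+1 (head [::] rest)) /\ crows n rest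
  end.

Lemma crows_prefix n rows : crows n rows ->
  (forall m i, 0 < i < n -> count_mem i (take m (flatten (rev rows))) <= count_mem i.+1 (take m (flatten (rev rows)))) /\
  (forall i, 0 < i < n -> count_mem i (flatten (rev rows)) + count_mem i.+1 (head [::] rows) <= count_mem i.+1 (flatten (rev rows))).
Proof.
elim: rows => [|R rest IH] /=; first by split => // m i _; case: m.
case=> H1 /IH [IH1 IH2]; split.
  move=> m i i0; rewrite flatten_rev_cons take_cat; case: ifP => _; first exact: IH1.
  rewrite !count_cat.
  have := count_take_le i R (m - size (flatten (rev rest))); have := H1 i i0; have := IH2 i i0; nlia.
move=> i i0; rewrite flatten_rev_cons !count_cat; have := H1 i i0; have := IH2 i i0; nlia.
Qed.

Lemma crows_iota n f s k : (forall r i, 0 < i < n -> count_mem i (f r) <= count_mem i.+1 (f r.+1)) ->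
  f (s + k) = [::] -> crows n [seq f r | r <- iota s k].
Proof.
move=> H; elim: k s => [|k IH] s //= E; split; last by apply: IH; rewrite addSnnS.
move=> i i0; have := H s i i0.
case: k {IH} E => [|k] E /=; last by [].
by rewrite addn1 in E; rewrite E.
Qed.

Lemma key_col_cons g gs j :
  key_col (g :: gs) j = (if j <= g then [:: 1] else [::]) ++ map S (key_col gs j).
Proof.
rewrite /key_col /= -[2]/(1 + 1) iotaDl filter_map.
have -> : [seq 1 + i | i <- iota 1 (size gs) & preim (addn 1) (fun i : nat => j <= nth 0 (g :: gs) i.-1) i]
  = map S [seq i <- iota 1 (size gs) | j <= nth 0 gs i.-1].
  transitivity (map (addn 1) [seq i <- iota 1 (size gs) | j <= nth 0 gs i.-1]).
    congr map; apply: eq_in_filter => i.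
    by rewrite mem_iota => /andP [h1 _] /=; case: i h1.
  by apply: eq_map => i; rewrite add1n.
by case: (j <= g).
Qed.

Lemma mem_key_col gs j x :
  (x \in key_col gs j) = (0 < x <= size gs) && (j <= nth 0 gs x.-1).
Proof. rewrite /key_col mem_filter mem_iota andbC; congr (_ && _); lia. Qed.

Lemma size_key_col gs j : size (key_col gs j) <= size gs.
Proof. by rewrite /key_col size_filter (leq_trans (count_size _ _)) // size_iota. Qed.

Lemma size_key_col_mono gs j : 0 < j -> size (key_col gs j) <= size (key_col gs 1).
Proof.
move=> j0; rewrite /key_col !size_filter; apply: sub_count => i /=; lia.
Qed.

Lemma key_col_nil gs j : all (fun c => c < j) gs -> key_col gs j = [::].
Proof.
elim: gs => [|g gs IH] //= /andP [hg hA]; rewrite key_col_cons IH //.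
by rewrite leqNgt hg.
Qed.

Lemma key_col_full gs j : all (fun c => j <= c) gs -> key_col gs j = iota 1 (size gs).
Proof.
elim: gs => [|g gs IH] //= /andP [hg hA]; rewrite key_col_cons IH // hg /=.
by rewrite -[2]/(1 + 1) iotaDl; congr (_ :: _); apply: eq_map => i; rewrite add1n.
Qed.

Lemma key_col_dec gs j : pairwise geq gs -> key_col gs j = iota 1 (size (key_col gs j)).
Proof.
elim: gs => [|g gs IH] //= /andP [hg hp]; rewrite key_col_cons.
case: (leqP j g) => h /=.
  rewrite size_map {1}IH //= -[2]/(1 + 1) iotaDl; congr (_ :: _).
rewrite key_col_nil //; apply/allP => c hc; have := allP hg c hc => /=; lia.
Qed.

Lemma key_col_inc gs j : pairwise leq gs ->
  key_col gs j = iota ((size gs).+1 - size (key_col gs j)) (size (key_col gs j)).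
Proof.
elim: gs => [|g gs IH] //= /andP [hg hp]; rewrite key_col_cons.
case: (leqP j g) => h /=.
  rewrite (key_col_full (j := j)); last by apply/allP => c hc; have := allP hg c hc => /=; lia.
  rewrite size_map size_iota subSnn -[2]/(1 + 1) iotaDl; congr (_ :: _).
have hc := size_key_col gs j.
rewrite size_map {1}IH //.
have -> : (size gs).+2 - size (key_col gs j) = 1 + ((size gs).+1 - size (key_col gs j)) by lia.
by rewrite iotaDl; apply: eq_map => i; rewrite add1n.
Qed.

Lemma count_big (T : Type) (a : pred T) s : count a s = \sum_(x <- s) (a x : nat).
Proof. by elim: s => [|x s IH] /=; rewrite ?big_nil ?big_cons ?IH. Qed.

Lemma count_key_row gs r x : count_mem x (key_row gs r) =
  count (fun j => (r < size (key_col gs j)) && (nth 0 (key_col gs j) r == x)) (iota 1 (key_ncols gs)).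
Proof. by rewrite /key_row count_map count_filter; apply: eq_count => j /=; rewrite andbC. Qed.

Lemma key_row_last gs : key_row gs (size (key_col gs 1)) = [::].
Proof.
rewrite /key_row (eq_in_filter (a2 := pred0)) ?filter_pred0 // => j.
by rewrite mem_iota => /andP [j1 _] /=; rewrite ltnNge size_key_col_mono.
Qed.

Lemma le_ncols gs x : x \in gs -> x <= key_ncols gs.
Proof.
rewrite /key_ncols; elim: gs => [|g gs IH] //=; rewrite inE => /orP [/eqP -> | h].
  exact: leq_maxl.
exact: leq_trans (IH h) (leq_maxr _ _).
Qed.

Lemma count_col_nth (s : seq nat) x :
  count (fun r => nth 0 s r == x) (iota 0 (size s)) = count_mem x s.
Proof.
transitivity (count_mem x (map (nth 0 s) (iota 0 (size s)))); first by rewrite count_map.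
by rewrite (map_nth_iota0 0) // take_size. Qed.

Lemma count_tword_key gs x :
  count_mem x (tword (key gs)) = if 0 < x <= size gs then nth 0 gs x.-1 else 0.
Proof.
rewrite /tword /key count_flatten map_rev sumn_rev sumnE !big_map.
rewrite (eq_bigr (fun r => \sum_(j <- iota 1 (key_ncols gs)) ((r < size (key_col gs j)) && (nth 0 (key_col gs j) r == x) : nat))); last by move=> r _; rewrite count_key_row count_big.
rewrite exchange_big /=.
transitivity (\sum_(j <- iota 1 (key_ncols gs)) count_mem x (key_col gs j)).
  rewrite big_seq_cond [RHS]big_seq_cond; apply: eq_bigr => j /andP [hj _].
  have hc : size (key_col gs j) <= size (key_col gs 1).
    by apply: size_key_col_mono; move: hj; rewrite mem_iota => /andP [].
  rewrite -(count_big (fun i => (i < size (key_col gs j)) && (nth 0 (key_col gs j) i == x))).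
  transitivity (count (fun i => nth 0 (key_col gs j) i == x) (filter (fun i => i < size (key_col gs j)) (iota 0 (size (key_col gs 1))))).
    by rewrite count_filter; apply: eq_count => i /=; rewrite andbC.
  by rewrite -{1}(add0n (size (key_col gs j))) filter_iota_ltn // count_col_nth.
under eq_bigr => j _ do rewrite count_uniq_mem ?filter_uniq ?iota_uniq // mem_key_col.
case: ifP => hx; last by rewrite big1.
rewrite -count_big -size_filter.
have -> : [seq j <- iota 1 (key_ncols gs) | j <= nth 0 gs x.-1] = iota 1 (nth 0 gs x.-1).
  have H : nth 0 gs x.-1 <= key_ncols gs by apply: le_ncols; apply: mem_nth; nlia.
  rewrite -(filter_iota_ltn 1 H).
  by apply: eq_filter => j /=; rewrite add1n ltnS.
by rewrite size_iota.
Qed.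

Lemma mem_tword_key gs x : x \in tword (key gs) -> 0 < x <= size gs.
Proof.
rewrite /tword => /flattenP [R]; rewrite mem_rev => /mapP [r _ ->] {R}.
rewrite /key_row => /mapP [j]; rewrite mem_filter => /andP [hr _] ->.
by have := mem_nth 0 hr; rewrite mem_key_col => /andP [].
Qed.

Lemma yam_key gs : pairwise geq gs -> yamS (tword (key gs)).
Proof.
move=> P; split; first by move=> x /mem_tword_key /andP [].
have cnt r x : count_mem x (key_row gs r) = (x == r.+1) * count (fun j => r < size (key_col gs j)) (iota 1 (key_ncols gs)).
  rewrite count_key_row.
  transitivity (count (fun j => (r < size (key_col gs j)) && (r.+1 == x)) (iota 1 (key_ncols gs))).
    apply: eq_count => j /=; case: (ltnP r (size (key_col gs j))) => //= hr.
    by rewrite (key_col_dec j P) nth_iota -?(key_col_dec j P) // add1n.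
  rewrite eq_sym; case: (x == r.+1); rewrite ?mul1n ?mul0n.
    by apply: eq_count => j; rewrite andbT.
  by apply/eqP; rewrite -leqn0 leqn0 eqn0Ngt -has_count; apply/hasPn => j _; rewrite andbF.
move=> m i i0.
have := @yt_suffix [::] (key gs) _ m i i0; rewrite /= addn0; apply.
apply: yt_iota => [i' i0'|r i' i0']; rewrite !cnt.
  by rewrite (_ : (i'.+1 == 1) = false) //; apply/eqP; lia.
rewrite eqSS; case: eqP => _; rewrite ?mul0n // !mul1n.
by apply: sub_count => j /=; lia.
Qed.

Lemma coyam_key gs : pairwise leq gs -> coyamP (size gs) (tword (key gs)).
Proof.
move=> P; split; first by move=> x /mem_tword_key.
have := (@crows_prefix (size gs) (key gs) _).1; apply.
apply: crows_iota; last by rewrite add0n key_row_last.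
move=> r i i0; rewrite !count_key_row; apply: sub_count => j /= /andP [hr /eqP hi].
have E := key_col_inc j P; have hc := size_key_col gs j.
move: hr hi; rewrite E size_iota; set c := size (key_col gs j) => hr.
rewrite nth_iota // => hi.
have hr1 : r.+1 < c by lia.
rewrite hr1 nth_iota //=; apply/eqP; lia.
Qed.

Ltac mlia := change (Equality.sort Datatypes_nat__canonical__eqtype_Equality) with nat in *; lia.

Lemma sorted_map_iota (r : rel nat) (f : nat -> nat) m k :
  sorted r (map f (iota m k)) <-> (forall i, m <= i -> i.+1 < m + k -> r (f i) (f i.+1)).
Proof.
elim: k m => [|k IH] m /=; first by split => // _ i; lia.
case: k IH => [|k] IH /=; first by split => // _ i; lia.
rewrite -/(sorted r (f m.+1 :: map f (iota m.+2 k))); split.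
  case/andP => h1 /(IH m.+1) /= H i hi1 hi2.
  case: (ltngtP i m) => hh; [lia | apply: H; lia | by subst].
move=> H; apply/andP; split; first by apply: H; lia.
by apply/(IH m.+1) => i h1 h2; apply: H; lia.
Qed.

Lemma size_content n w : size (content n w) = n.
Proof. by rewrite /content size_map size_iota. Qed.

Lemma nth_content n w x : 0 < x <= n -> nth 0 (content n w) x.-1 = count_mem x w.
Proof.
move=> hx; rewrite /content (nth_map 0) ?size_iota; last by mlia.
by rewrite nth_iota; [congr count; congr pred1; mlia | mlia].
Qed.

Lemma count_out n w y : word_on n w -> ~~ (0 < y <= n) -> count_mem y w = 0.
Proof.
move=> /allP hw hy; apply/eqP; rewrite -leqn0 leqn0 eqn0Ngt -has_count.
by apply/hasPn => x /hw /= hx; apply/eqP => E; subst; rewrite hx in hy.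
Qed.

Lemma count_key_content n w y : word_on n w ->
  count_mem y (tword (key (content n w))) = count_mem y w.
Proof.
move=> hw; rewrite count_tword_key size_content; case: ifP => hy.
  by rewrite nth_content.
by rewrite (count_out hw) // hy.
Qed.

Lemma pairwise_nseq n a : pairwise geq (nseq n a).
Proof. by elim: n => //= n ->; rewrite andbT all_nseq /= leqnn orbT. Qed.

Lemma count_key_nseq n a y :
  count_mem y (tword (key (nseq n a))) = if 0 < y <= n then a else 0.
Proof.
rewrite count_tword_key size_nseq; case: ifP => // hy.
by rewrite nth_nseq; case: ifP => //; mlia.
Qed.

Unset Implicit Arguments.

Theorem proposition5p4 (a n : nat) (ha : 0 < a) (hn : 0 < n)
    (u v : seq nat) (hu : word_on n u) (hv : word_on n v) :
  knuth_equiv (v ++ u) (tword (key (nseq n a))) <->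
  [/\ is_partition (content n u),
      [seq x.1 + x.2 | x <- zip (content n u) (content n v)] = nseq n a,
      knuth_equiv u (tword (key (content n u)))
    & knuth_equiv v (tword (key (content n v)))].
Proof.
have hu' : forall x, x \in u -> 0 < x <= n by apply/allP.
have hv' : forall x, x \in v -> 0 < x <= n by apply/allP.
have Ezip : [seq x.1 + x.2 | x <- zip (content n u) (content n v)] =
            [seq count_mem i u + count_mem i v | i <- iota 1 n].
  by rewrite /content zip_map -map_comp.
have Pgeq : forall w, pairwise geq (content n w) <->
    (forall i, 0 < i -> i < n -> count_mem i.+1 w <= count_mem i w).
  move=> w; rewrite -sorted_pairwise; last exact: geq_trans'.
  rewrite sorted_map_iota; split => H i h1 h2; apply: H; mlia.
have Pleq : forall w, pairwise leq (content n w) <->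
    (forall i, 0 < i -> i < n -> count_mem i w <= count_mem i.+1 w).
  move=> w; rewrite -sorted_pairwise; last exact: leq_trans'.
  rewrite sorted_map_iota; split => H i h1 h2; apply: H; mlia.
have Cv_of : (forall i, 0 < i <= n -> count_mem i u + count_mem i v = a) ->
    (forall m i, 0 < i -> count_mem i.+1 (drop m (v ++ u)) <= count_mem i (drop m (v ++ u))) ->
    coyamP n v.
  move=> S Y; split => // m i i0.
  have [m' [hm' E]] : exists m', m' <= size v /\ take m v = take m' v.
    case: (leqP m (size v)) => h; first by exists m.
    by exists (size v); rewrite take_size take_oversize // ltnW.
  rewrite E; have := Y m' i ltac:(lia).
  rewrite drop_cat; case: ltnP => hm2.
  - rewrite !count_cat.
    have := S i ltac:(lia); have := S i.+1 ltac:(lia).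
    have D x : count_mem x v = count_mem x (take m' v) + count_mem x (drop m' v) by rewrite -count_cat cat_take_drop.
    have := D i; have := D i.+1; mlia.
  - have -> : m' = size v by lia.
    rewrite subnn drop0 take_size.
    have := S i ltac:(lia); have := S i.+1 ltac:(lia); mlia.
split.
- move=> K.
  have YY : yamS (v ++ u) by apply/(yam_knuth K)/yam_key/pairwise_nseq.
  have Cvu y : count_mem y (v ++ u) = if 0 < y <= n then a else 0.
    by rewrite -count_key_nseq; apply: knuth_count.
  have S i : 0 < i <= n -> count_mem i u + count_mem i v = a.
    by move=> hi; have := Cvu i; rewrite hi count_cat addnC.
  have Yu : yamS u.
    split; first by move=> x /hu' /andP [].
    move=> m i i0; have := YY.2 (size v + m) i i0.
    by rewrite drop_cat ltnNge leq_addr /= addKn.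
  have PA : pairwise geq (content n u).
    by apply/Pgeq => i i0 _; have := Yu.2 0 i i0; rewrite drop0.
  have Cv : coyamP n v by apply: Cv_of => //; exact: YY.2.
  have PB : pairwise leq (content n v).
    apply/Pleq => i i0 i1; have := S i ltac:(lia); have := S i.+1 ltac:(lia).
    have := (Pgeq u).1 PA i i0 i1; mlia.
  split.
  + by rewrite /is_partition sorted_pairwise //; exact: geq_trans'.
  + have MC : forall s : seq nat, map (fun=> a) s = nseq (size s) a by elim => //= x s ->.
    rewrite Ezip (_ : nseq n a = map (fun=> a) (iota 1 n)); last by rewrite MC size_iota.
    apply/eq_in_map => i; rewrite mem_iota => hi; apply: S; mlia.
  + apply: yam_equiv => //; first exact: yam_key.
    by move=> y; rewrite count_key_content.
  + apply: (@coyam_equiv n) => //.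
      by have := coyam_key PB; rewrite size_content.
    by move=> y; rewrite count_key_content.
- case=> HP HS Ku Kv.
  have PA : pairwise geq (content n u).
    by rewrite -sorted_pairwise //; exact: geq_trans'.
  have S i : 0 < i <= n -> count_mem i u + count_mem i v = a.
    move=> hi; have : count_mem i u + count_mem i v \in nseq n a.
      rewrite -HS Ezip; apply/mapP; exists i => //; rewrite mem_iota; mlia.
    by rewrite mem_nseq => /andP [_ /eqP].
  have PB : pairwise leq (content n v).
    apply/Pleq => i i0 i1; have := S i ltac:(lia); have := S i.+1 ltac:(lia).
    have := (Pgeq u).1 PA i i0 i1; mlia.
  have Yu : yamS u by apply/(yam_knuth Ku)/yam_key.
  have Cv : coyamP n v.
    apply/(coyam_knuth n Kv); have := coyam_key PB; rewrite size_content; exact.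
  have YY : yamS (v ++ u).
    split.
      by move=> x; rewrite mem_cat => /orP [/hv' | /hu'] /andP [].
    move=> m i i0; rewrite drop_cat; case: ltnP => hm; last exact: Yu.2.
    case: (ltnP i n) => hi.
      have := Cv.2 m i ltac:(lia); have := S i ltac:(lia); have := S i.+1 ltac:(lia).
      have D x : count_mem x v = count_mem x (take m v) + count_mem x (drop m v) by rewrite -count_cat cat_take_drop.
      rewrite !count_cat; have := D i; have := D i.+1; mlia.
    have z : count_mem i.+1 (v ++ u) = 0.
      apply: (count_out (n := n)); first by rewrite /word_on all_cat; apply/andP; split; [exact: hv | exact: hu].
      apply/negP => /andP [_ h]; mlia.
    have := count_drop_le i.+1 (v ++ u) m; rewrite z drop_cat hm; mlia.
  apply: yam_equiv => //; first exact/yam_key/pairwise_nseq.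
  move=> y; rewrite count_key_nseq count_cat; case: ifP => hy.
    by rewrite addnC S.
  by rewrite !(count_out _ (negbT hy)).
Qed.
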